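(* Let $\phi:\mathbb{R}^n\to\mathbb{R}\cup\{+\infty\}$ be proper lsc convex, $(x^-,\chi,\varepsilon)\in\mathrm{dom}\,\phi\times[0,1)\times\mathbb{R}_{++}$, and let $(x,y,\Gamma,\lambda)$, with $x,y\in\mathrm{dom}\,\phi$, $\Gamma$ proper lsc convex, $\Gamma\le\phi$, $\lambda>0$, satisfy \[ \phi(y)+\frac{\chi}{2\lambda}\|y-x^-\|^2-\min_{u}\left\{\Gamma(u)+\frac1{2\lambda}\|u-x^-\|^2\right\}\le\varepsilon,\qquad x=\mathrm{argmin}_{u}\left\{\Gamma(u)+\frac1{2\lambda}\|u-x^-\|^2\right\}. \] Define $s:=(x^--x)/\lambda$ and $\eta:=\phi(y)-\Gamma(x)-\langle s,y-x\rangle$. Then: (a) $s\in\partial\Gamma(x)$, i.e. $\Gamma(u)\ge\Gamma(x)+\langle s,u-x\rangle$ for all $u\in\mathbb{R}^n$; (b) $s\in\partial_\eta\phi(y)$ and $0\le2\lambda\eta\le2\lambda\varepsilon-\|y-x\|^2+(1-\chi)\|y-x^-\|^2$.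
   Context: For $\eta\ge0$, $\partial_\eta\phi(y)=\{v:\phi(u)\ge\phi(y)+\langle v,u-y\rangle-\eta\ \forall u\in\mathbb{R}^n\}$. *)

(* Defs.v *)
(* R : realType, vectors of R^n are row vectors 'rV[R]_n
   (with the product/Euclidean topology), extended-valued functions map to \bar R. *)
From HB Require Import structures.
From mathcomp Require Import all_boot all_order all_algebra.
From mathcomp Require Import all_classical all_reals all_analysis.
Import numFieldTopology.Exports numFieldNormedType.Exports.
Set Implicit Arguments. Unset Strict Implicit. Unset Printing Implicit Defensive.
Import Order.TTheory GRing.Theory Num.Theory.
Local Open Scope ring_scope.

Section Defs.
Context {R : realType} {n : nat}.
Implicit Types (u v : 'rV[R]_n) (phi : 'rV[R]_n -> \bar R).

Definition dotp u v : R := \sum_(i < n) u 0 i * v 0 i.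
Definition sqnorm u : R := dotp u u.

Definition edom phi : set 'rV[R]_n := [set x | (phi x < +oo)%E].

Definition proper_fun phi : Prop :=
  (forall x, phi x != -oo%E) /\ exists x, (phi x < +oo)%E.

Definition convex_fun phi : Prop :=
  forall (x y : 'rV[R]_n) (t : R), 0 <= t <= 1 ->
    (phi (t *: x + (1 - t) *: y)%R <= t%:E * phi x + (1 - t)%:E * phi y)%E.

Definition proper_lsc_convex phi : Prop :=
  proper_fun phi /\ lower_semicontinuous phi /\ convex_fun phi.

Definition eps_subdiff phi (eta : R) y v : Prop :=
  forall u, (phi y + (dotp v (u - y) - eta)%:E <= phi u)%E.

Definition subdiff phi y v : Prop :=
  forall u, (phi y + (dotp v (u - y))%:E <= phi u)%E.

End Defs.

(* Main.v *)
Require Import Defs.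
From HB Require Import structures.
From mathcomp Require Import all_boot all_order all_algebra.
From mathcomp Require Import all_classical all_reals all_analysis.
From mathcomp Require Import ring lra.
Import Order.TTheory GRing.Theory Num.Theory.
Local Open Scope ring_scope.

Section H.
Context {R : realType} {n : nat}.
Implicit Types (u v w : 'rV[R]_n).
Lemma dotpDl u v w : dotp (u + v) w = dotp u w + dotp v w.
Proof. rewrite /dotp -big_split; apply eq_bigr => i _; by rewrite mxE mulrDl. Qed.
Lemma dotpZl (k : R) u w : dotp (k *: u) w = k * dotp u w.
Proof. rewrite /dotp mulr_sumr; apply eq_bigr => i _; by rewrite mxE mulrA. Qed.
Lemma dotpC u v : dotp u v = dotp v u.
Proof. rewrite /dotp; apply eq_bigr => i _; by rewrite mulrC. Qed.
Lemma dotpNl u w : dotp (- u) w = - dotp u w.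
Proof. rewrite /dotp -sumrN; apply eq_bigr => i _; by rewrite mxE mulNr. Qed.
Lemma dotpDr u v w : dotp w (u + v) = dotp w u + dotp w v.
Proof. by rewrite dotpC dotpDl !(dotpC w). Qed.
Lemma dotpZr (k : R) u w : dotp w (k *: u) = k * dotp w u.
Proof. by rewrite dotpC dotpZl (dotpC w). Qed.
Lemma sqnormD u v : sqnorm (u + v) = sqnorm u + 2 * dotp u v + sqnorm v.
Proof. rewrite /sqnorm dotpDl !dotpDr (dotpC v u); ring. Qed.
Lemma sqnormZ (k : R) u : sqnorm (k *: u) = k ^+ 2 * sqnorm u.
Proof. rewrite /sqnorm dotpZl dotpZr; ring. Qed.
Lemma sqnormN u : sqnorm (- u) = sqnorm u.
Proof. by rewrite /sqnorm dotpNl dotpC dotpNl opprK. Qed.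

Lemma lim_lemma (a b c : R) :
  (forall t, 0 < t <= 1 -> b - t * c <= a) -> b <= a.
Proof.
move=> H; rewrite leNgt; apply/negP => ba.
pose t := Num.min 1 ((b - a) / (`|c| + 1)).
have c1 : 0 < `|c| + 1 by rewrite ltr_wpDl.
have t0 : 0 < t by rewrite lt_min ltr01 divr_gt0 // subr_gt0.
have t1 : t <= 1 by rewrite ge_min lexx.
have t2 : t <= (b - a) / (`|c| + 1) by rewrite ge_min lexx orbT.
have := H t; rewrite t0 t1 => /(_ isT).
have : t * c <= t * `|c| by rewrite ler_pM2l // ler_norm.
have : t * `|c| < b - a.
  have : t * (`|c| + 1) <= b - a by rewrite -ler_pdivlMr.
  have : 0 <= `|c| by [].
  nra.
lra.
Qed.
End H.
Theorem lemma3p3 (R : realType) (n : nat) (phi Gamma : 'rV[R]_n -> \bar R)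
    (xm x y : 'rV[R]_n) (chi eps lambda : R) :
  proper_lsc_convex phi ->
  edom phi xm -> 0 <= chi < 1 -> 0 < eps ->
  edom phi x -> edom phi y ->
  proper_lsc_convex Gamma ->
  (forall u, (Gamma u <= phi u)%E) ->
  0 < lambda ->
  (* x = argmin_u { Gamma(u) + ||u - xm||^2/(2 lambda) } *)
  (forall u, (Gamma x + (sqnorm (x - xm) / (2 * lambda))%:E
              <= Gamma u + (sqnorm (u - xm) / (2 * lambda))%:E)%E) ->
  (phi y + (chi / (2 * lambda) * sqnorm (y - xm))%:E
     - (Gamma x + (sqnorm (x - xm) / (2 * lambda))%:E) <= eps%:E)%E ->
  let s := lambda^-1 *: (xm - x) in
  let eta := fine (phi y) - fine (Gamma x) - dotp s (y - x) in
  subdiff Gamma x s /\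
  (eps_subdiff phi eta y s /\
   0 <= 2 * lambda * eta /\
   2 * lambda * eta <= 2 * lambda * eps - sqnorm (y - x) + (1 - chi) * sqnorm (y - xm)).
Proof.
move=> [[phiN _] _] _ hchi heps hx hy [[GN _] [_ Gc]] Gphi lam0 Hopt Hy s eta.
have Gxr : Gamma x \is a fin_num.
  rewrite fin_numE GN /=; apply/negP => /eqP E.
  by move: (Gphi x) (hx); rewrite /edom /= E leye_eq => /eqP ->; rewrite ltxx.
have phyr : phi y \is a fin_num by rewrite fin_numE phiN /= lt_eqF.
set gx := fine (Gamma x) in eta *.
set py := fine (phi y) in eta *.
have Egx : Gamma x = gx%:E by rewrite fineK.
have Epy : phi y = py%:E by rewrite fineK.
have sub : subdiff Gamma x s.
  move=> u; rewrite Egx.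
  case Eu: (Gamma u) => [gu| |]; last by move: (GN u); rewrite Eu.
    2: by rewrite leey.
  rewrite lee_fin.
  set N := sqnorm (u - x).
  set D := dotp (u - x) (x - xm).
  set X := sqnorm (x - xm).
  have Hs : dotp s (u - x) = - lambda^-1 * D.
    by rewrite /s dotpZl -opprB dotpNl dotpC /D mulrN mulNr.
  rewrite Hs.
  apply: (@lim_lemma _ _ _ (N / (2 * lambda))) => t /andP [t0 t1].
  pose z := t *: u + (1 - t) *: x.
  have Ez : z - xm = t *: (u - x) + (x - xm).
    by apply/rowP => i; rewrite !mxE; ring.
  have Hc := Gc u x t.
  rewrite (ltW t0) t1 /= in Hc; have {}Hc := Hc isT.
  rewrite Eu Egx -!EFinM -EFinD in Hc.
  have Ho := Hopt z.
  rewrite Egx -EFinD in Ho.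
  have H := le_trans Ho (leeD2r _ Hc).
  rewrite -EFinD lee_fin Ez (sqnormD (t *: _)) sqnormZ -/N -/X in H.
  rewrite dotpZl -/D in H.
  have HL : lambda^-1 = 2 * (2 * lambda)^-1 by field; rewrite lt0r_neq0.
  rewrite HL.
  have K0 : 0 < (2 * lambda)^-1 by rewrite invr_gt0 mulr_gt0.
  set K := (2 * lambda)^-1 in H K0 *.
  clearbody K.
  have H2 : 0 <= t * (gu - gx + t * N * K + 2 * K * D) by nra.
  rewrite pmulr_rge0 // in H2.
  lra.
split => //.
have Hs : forall v, dotp s v = - lambda^-1 * dotp v (x - xm).
  by move=> v; rewrite /s dotpZl -opprB dotpNl dotpC mulrN mulNr.
have lam2 : 0 < 2 * lambda by rewrite mulr_gt0.
split.
  move=> u; rewrite Epy -EFinD.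
  apply: le_trans (Gphi u); apply: le_trans (sub u).
  rewrite Egx -EFinD lee_fin /eta.
  have -> : u - y = (u - x) + - (y - x).
    by apply/rowP => i; rewrite !mxE; ring.
  rewrite dotpDr (dotpC s (- _)) dotpNl (dotpC _ s); lra.
have eta0 : 0 <= eta.
  have := le_trans (sub y) (Gphi y).
  rewrite Egx Epy -EFinD lee_fin /eta; lra.
split; first by rewrite mulr_ge0 // ltW.
rewrite Epy Egx -!EFinD lee_fin in Hy.
have Hy' := ler_wpM2l (ltW lam2) Hy.
have -> : y - xm = (y - x) + (x - xm) by apply/rowP => i; rewrite !mxE; ring.
move: Hy'; have -> : y - xm = (y - x) + (x - xm) by apply/rowP => i; rewrite !mxE; ring.
rewrite (sqnormD (y - x)) /eta Hs.
set B := sqnorm (y - x); set D := dotp (y - x) (x - xm); set X := sqnorm (x - xm).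
have E1 : 2 * lambda * (py + chi / (2 * lambda) * (B + 2 * D + X) - (gx + X / (2 * lambda)))
   = 2 * lambda * py + chi * (B + 2 * D + X) - 2 * lambda * gx - X.
  by field; rewrite lt0r_neq0.
have E2 : 2 * lambda * (py - gx - - lambda^-1 * D) = 2 * lambda * py - 2 * lambda * gx + 2 * D.
  by field; rewrite lt0r_neq0.
rewrite E1 E2.
lra.
Qed.
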